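(* Let $\beta,\gamma,\delta\in\mathbb{R}$ be nonzero and let $A=\begin{pmatrix}0&\beta\\\gamma&\delta\end{pmatrix}$ or $A=\begin{pmatrix}\delta&\gamma\\\beta&0\end{pmatrix}$. Then $A$ is a Karamardian matrix if and only if $\gamma<0$, $\beta>0$ and $\delta>0$.
   Context: For $M\in\mathbb{R}^{n\times n}$ let $K_M=\mathbb{R}^n_+\cap R(M)$ and $K_M^*=\{y: x^Ty\ge 0\ \forall x\in K_M\}$ (one has $K_M^*=\mathbb{R}^n_++N(M^T)$, with interior $\{a+b: a>0,\ b\in N(M^T)\}$); for invertible $M$, $K_M=K_M^*=\mathbb{R}^n_+$. For $q$, LCP$(M,K_M,q)$ is to find $x\in K_M$ with $Mx+q\in K_M^*$ and $x^T(Mx+q)=0$. $M$ is a Karamardian matrix if $K_M\ne\{0\}$ and there exists $d$ in the interior of $K_M^*$ such that both LCP$(M,K_M,0)$ and LCP$(M,K_M,d)$ have $x=0$ as their only solution. *)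

(* Defs.v *)
From mathcomp Require Import all_boot all_order all_algebra.
From mathcomp Require Import reals.
Set Implicit Arguments. Unset Strict Implicit. Unset Printing Implicit Defensive.
Import Order.TTheory GRing.Theory Num.Theory.
Local Open Scope ring_scope.

Section Karamardian.
Variable R : realType.
Variable n : nat.
Implicit Types (M : 'M[R]_n) (x y q : 'cV[R]_n).

Definition dotv x y : R := \sum_(i < n) x i 0 * y i 0.

Definition nonnegv x : Prop := forall i, 0 <= x i 0.

Definition KM M (x : 'cV[R]_n) : Prop := nonnegv x /\ exists z : 'cV[R]_n, x = M *m z.

Definition KMdual M (y : 'cV[R]_n) : Prop := forall x, KM M x -> 0 <= dotv x y.

(* topological interior in R^n (sup-norm balls; all norms on R^n are equivalent) *)
Definition interiorv (S : 'cV[R]_n -> Prop) (d : 'cV[R]_n) : Prop :=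
  exists2 eps : R, 0 < eps &
    forall z : 'cV[R]_n, (forall i, `|z i 0 - d i 0| < eps) -> S z.

Definition LCP_sol M q x : Prop :=
  KM M x /\ KMdual M (M *m x + q) /\ dotv x (M *m x + q) = 0.

Definition karamardian M : Prop :=
  (exists x, KM M x /\ x <> 0) /\
  exists d, interiorv (KMdual M) d /\
    (forall x, LCP_sol M 0 x -> x = 0) /\
    (forall x, LCP_sol M d x -> x = 0).

End Karamardian.

Definition mx2 (R : realType) (a b c e : R) : 'M[R]_2 :=
  \matrix_(i < 2, j < 2)
    if (i : nat) == 0%N then (if (j : nat) == 0%N then a else b)
    else (if (j : nat) == 0%N then c else e).

(* Main.v *)
Require Import Defs.
From mathcomp Require Import all_boot all_order all_algebra.
From mathcomp Require Import reals.
From mathcomp Require Import ring lra.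
Import Order.TTheory GRing.Theory Num.Theory.
Local Open Scope ring_scope.
Section S.
Variable R : realType.
Implicit Types (a b c e t s : R) (x y q : 'cV[R]_2).

Definition col2 t s : 'cV[R]_2 := \col_(i < 2) (if (i : nat) == 0%N then t else s).

Lemma col2E0 t s : col2 t s 0 0 = t. Proof. by rewrite mxE. Qed.
Lemma col2E1 t s : col2 t s 1 0 = s. Proof. by rewrite mxE. Qed.

Lemma cv2_eta x : x = col2 (x 0 0) (x 1 0).
Proof.
apply/matrixP => i j; rewrite !ord1 mxE.
by case: i => [[|[|k]] Hi] //=; congr (x _ _); apply/val_inj.
Qed.

Lemma cv2_eq0 x : x = 0 <-> x 0 0 = 0 /\ x 1 0 = 0.
Proof.
split; first by move=> ->; rewrite !mxE.
by case=> h0 h1; rewrite (cv2_eta x) h0 h1; apply/matrixP=> i j; rewrite !mxE; case: ifP.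
Qed.

Lemma mulmx2_0 a b c e x : (mx2 a b c e *m x) 0 0 = a * x 0 0 + b * x 1 0.
Proof. rewrite !mxE big_ord_recl big_ord1 !mxE /=; by have -> : lift ord0 ord0 = 1 :> 'I_2 by apply/val_inj. Qed.
Lemma mulmx2_1 a b c e x : (mx2 a b c e *m x) 1 0 = c * x 0 0 + e * x 1 0.
Proof. rewrite !mxE big_ord_recl big_ord1 !mxE /=; by have -> : lift ord0 ord0 = 1 :> 'I_2 by apply/val_inj. Qed.

Lemma dotv2 x y : dotv x y = x 0 0 * y 0 0 + x 1 0 * y 1 0.
Proof. rewrite /dotv big_ord_recl big_ord1 /=; by have -> : lift ord0 ord0 = 1 :> 'I_2 by apply/val_inj. Qed.

Lemma nonneg2 x : nonnegv x <-> 0 <= x 0 0 /\ 0 <= x 1 0.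
Proof.
split; first by move=> h; split; apply: h.
case=> h0 h1 i; idtac.
by case: i => [[|[|k]] Hi] //=; [move: h0|move: h1]; congr (0 <= x _ _); apply/val_inj.
Qed.

Lemma KM2 a b c e x : a * e - b * c != 0 ->
  KM (mx2 a b c e) x <-> 0 <= x 0 0 /\ 0 <= x 1 0.
Proof.
move=> hD; rewrite /KM nonneg2; split; first by case.
move=> h; split => //.
exists (col2 ((e * x 0 0 - b * x 1 0) / (a * e - b * c))
             ((a * x 1 0 - c * x 0 0) / (a * e - b * c))).
rewrite [LHS]cv2_eta; apply/matrixP => i j; rewrite !ord1.
case: i => [[|[|k]] Hi] //=.
- have -> : Ordinal Hi = 0 by apply/val_inj.
  rewrite mulmx2_0 col2E0 col2E1 col2E0; field; exact: hD.
- have -> : Ordinal Hi = 1 by apply/val_inj.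
  rewrite mulmx2_1 col2E0 col2E1 col2E1; field; exact: hD.
Qed.

Lemma KMdual2 a b c e y : a * e - b * c != 0 ->
  KMdual (mx2 a b c e) y <-> 0 <= y 0 0 /\ 0 <= y 1 0.
Proof.
move=> hD; split.
- move=> h; split.
  + have := h (col2 1 0); rewrite dotv2 !col2E0 !col2E1.
    rewrite mul1r mul0r addr0; apply; apply/KM2 => //.
    by rewrite col2E0 col2E1 ler01 lexx.
  + have := h (col2 0 1); rewrite dotv2 !col2E0 !col2E1.
    rewrite mul1r mul0r add0r; apply; apply/KM2 => //.
    by rewrite col2E0 col2E1 ler01 lexx.
- case=> h0 h1 x /KM2 -/(_ hD) [x0 x1]; rewrite dotv2.
  by apply: addr_ge0; apply: mulr_ge0.
Qed.

Lemma interior2 a b c e d : a * e - b * c != 0 ->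
  interiorv (KMdual (mx2 a b c e)) d <-> 0 < d 0 0 /\ 0 < d 1 0.
Proof.
move=> hD; split.
- case=> eps he h.
  have H : KMdual (mx2 a b c e) (col2 (d 0 0 - eps / 2) (d 1 0 - eps / 2)).
    apply: h => i; case: i => [[|[|k]] Hi] //=.
    * have -> : Ordinal Hi = 0 by apply/val_inj.
      rewrite col2E0 addrAC subrr add0r normrN ger0_norm; lra.
    * have -> : Ordinal Hi = 1 by apply/val_inj.
      rewrite col2E1 addrAC subrr add0r normrN ger0_norm; lra.
  move: H => /(@KMdual2 _ _ _ _ _ hD); rewrite col2E0 col2E1 => -[h0 h1]; split; lra.
- case=> h0 h1; exists (Num.min (d 0 0) (d 1 0)); first by rewrite lt_min h0 h1.
  move=> z hz; apply/KMdual2 => //.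
  have := hz 0; have := hz 1; rewrite !lt_min => /andP[_ g1] /andP[g0 _].
  move: g0 g1; rewrite !ltr_norml => /andP[g0 _] /andP[g1 _]; split; lra.
Qed.


Definition P a b c e (u v : R) := forall t s, 0 <= t -> 0 <= s ->
  0 <= a * t + b * s + u -> 0 <= c * t + e * s + v ->
  t * (a * t + b * s + u) + s * (c * t + e * s + v) = 0 -> t = 0 /\ s = 0.

Lemma ent0 a b c e q x : (mx2 a b c e *m x + q) 0 0 = a * x 0 0 + b * x 1 0 + q 0 0.
Proof. by rewrite [LHS]mxE mulmx2_0. Qed.
Lemma ent1 a b c e q x : (mx2 a b c e *m x + q) 1 0 = c * x 0 0 + e * x 1 0 + q 1 0.
Proof. by rewrite [LHS]mxE mulmx2_1. Qed.

Lemma LCP2 a b c e q x : a * e - b * c != 0 ->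
  LCP_sol (mx2 a b c e) q x <->
  [/\ 0 <= x 0 0, 0 <= x 1 0, 0 <= a * x 0 0 + b * x 1 0 + q 0 0,
      0 <= c * x 0 0 + e * x 1 0 + q 1 0 &
      x 0 0 * (a * x 0 0 + b * x 1 0 + q 0 0) + x 1 0 * (c * x 0 0 + e * x 1 0 + q 1 0) = 0].
Proof.
move=> hD; rewrite /LCP_sol (KM2 _ _ _ _ _ hD) (KMdual2 _ _ _ _ _ hD) dotv2 ent0 ent1.
split; [by case=> -[? ?] [[? ?] ?]|by case=> ? ? ? ? ?].
Qed.

Lemma kar2 a b c e : a * e - b * c != 0 ->
  karamardian (mx2 a b c e) <->
  exists d1 d2, [/\ 0 < d1, 0 < d2, P a b c e 0 0 & P a b c e d1 d2].
Proof.
move=> hD; split.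
- case=> _ [d [/(interior2 _ _ _ _ _ hD) [h0 h1] [H0 Hd]]].
  exists (d 0 0), (d 1 0); split => //.
  + move=> t s ht hs g0 g1 g2.
    have /cv2_eq0 : col2 t s = 0.
      apply: H0; apply/LCP2 => //; rewrite !col2E0 !col2E1 !mxE !addr0.
      by rewrite !addr0 in g0 g1 g2.
    by rewrite col2E0 col2E1.
  + move=> t s ht hs g0 g1 g2.
    have /cv2_eq0 : col2 t s = 0.
      by apply: Hd; apply/LCP2 => //; rewrite !col2E0 !col2E1.
    by rewrite col2E0 col2E1.
- case=> d1 [d2 [h1 h2 P0 Pd]]; split.
    exists (col2 1 0); split; first by apply/KM2 => //; rewrite col2E0 col2E1 ler01 lexx.
    by move/cv2_eq0; rewrite col2E0 => -[/eqP]; rewrite oner_eq0.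
  exists (col2 d1 d2); split.
    by apply/interior2 => //; rewrite col2E0 col2E1.
  split.
  + move=> x /LCP2 -/(_ hD) [g0 g1 g2 g3 g4]; apply/cv2_eq0.
    apply: P0 => //; rewrite ?addr0; move: g2 g3 g4; rewrite !mxE !addr0 //.
  + move=> x /LCP2 -/(_ hD) [g0 g1 g2 g3 g4]; apply/cv2_eq0.
    by apply: Pd; move: g2 g3 g4; rewrite !col2E0 !col2E1.
Qed.

Lemma Pswap (beta gamma delta u v : R) :
  P delta gamma beta 0 u v <-> P 0 beta gamma delta v u.
Proof.
split=> H t s ht hs g0 g1 g2.
- have [-> ->] : s = 0 /\ t = 0; last by [].
  apply: H => //; lra.
- have [-> ->] : s = 0 /\ t = 0; last by [].
  apply: H => //; lra.
Qed.

Lemma suff0 (beta gamma delta : R) : gamma < 0 -> 0 < beta -> 0 < delta ->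
  P 0 beta gamma delta 0 0.
Proof.
move=> gl bp dp t s ht hs g0 g1 g2.
have e1 : t * (0 * t + beta * s + 0) = 0 by nra.
have e2 : s * (gamma * t + delta * s + 0) = 0 by nra.
have ts : t * s = 0.
  have : beta * (t * s) = 0 by rewrite -e1; ring.
  by move/eqP; rewrite mulf_eq0 (gt_eqF bp) /= => /eqP.
have ss : delta * (s * s) = s * (gamma * t + delta * s + 0) - gamma * (t * s) by ring.
rewrite e2 ts mulr0 subr0 in ss.
have s0 : s = 0.
  by move/eqP: ss; rewrite mulf_eq0 (gt_eqF dp) mulf_eq0 orbb => /eqP.
split=> //; move: g1; rewrite s0 mulr0 !addr0 => g1.
apply/eqP; rewrite eq_le ht andbT; rewrite -(ler_nM2l gl) mulr0 //.
Qed.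

Lemma suff1 (beta gamma delta d1 d2 : R) : gamma < 0 -> 0 < beta -> 0 < delta ->
  0 < d1 -> 0 < d2 -> P 0 beta gamma delta d1 d2.
Proof.
move=> gl bp dp h1 h2 t s ht hs g0 g1 g2.
have e1 : t * (0 * t + beta * s + d1) = 0 by nra.
have e2 : s * (gamma * t + delta * s + d2) = 0 by nra.
have t0 : t = 0.
  move/eqP: e1; rewrite mulf_eq0 => /orP[/eqP //|].
  rewrite gt_eqF //; nra.
split=> //; move/eqP: e2; rewrite t0 mulf_eq0 => /orP[/eqP //|].
rewrite gt_eqF //; nra.
Qed.
Lemma core (beta gamma delta : R) : beta != 0 -> gamma != 0 -> delta != 0 ->
  (exists d1 d2, [/\ 0 < d1, 0 < d2, P 0 beta gamma delta 0 0 & P 0 beta gamma delta d1 d2])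
  <-> (gamma < 0 /\ 0 < beta /\ 0 < delta).
Proof.
move=> hb hg hd; split; last first.
  case=> gl [bp dp]; exists 1, 1; split; rewrite ?ltr01 //.
    exact: suff0.
  by apply: suff1; rewrite ?ltr01.
case=> d1 [d2 [h1 h2 P0 Pd]].
have gl : gamma < 0.
  case: (ltrgtP gamma 0) => // [gp|ge]; last by move: hg; rewrite ge eqxx.
  have [] := P0 1 0 ler01 (lexx 0); rewrite ?mulr0 ?mul0r ?mulr1 ?addr0 //; try lra.
split => //.
have common : beta < 0 -> 0 <= delta * (d1 / - beta) + d2 -> False.
  move=> bn hw.
  set s1 := d1 / - beta.
  have s1p : 0 < s1 by rewrite divr_gt0 // oppr_gt0.
  have bs1 : beta * s1 = - d1 by rewrite /s1; field; exact: hb.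
  set t1 := (delta * s1 + d2) / - gamma.
  have t1p : 0 <= t1 by rewrite divr_ge0 // oppr_ge0 ltW.
  have gt1 : gamma * t1 = - (delta * s1 + d2) by rewrite /t1; field; exact: hg.
  have w1 : 0 * t1 + beta * s1 + d1 = 0 by rewrite mul0r add0r bs1 addNr.
  have w2 : gamma * t1 + delta * s1 + d2 = 0 by rewrite gt1 -addrA addNr.
  have [_ s10] := Pd t1 s1 t1p (ltW s1p) ltac:(by rewrite w1) ltac:(by rewrite w2) ltac:(by rewrite w1 w2 !mulr0 addr0).
  by move: s1p; rewrite s10 ltxx.
case: (ltrgtP delta 0) => [dn|dp|de]; last by move: hd; rewrite de eqxx.
- exfalso.
  set s0 := d2 / - delta.
  have s0p : 0 < s0 by rewrite divr_gt0 // oppr_gt0.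
  have ds0 : delta * s0 = - d2 by rewrite /s0; field; exact: hd.
  case: (lerP 0 (beta * s0 + d1)) => cB.
    have w2 : gamma * 0 + delta * s0 + d2 = 0 by rewrite mulr0 add0r ds0 addNr.
    have [_ s00] := Pd 0 s0 (lexx 0) (ltW s0p) ltac:(by rewrite mulr0 add0r)
      ltac:(by rewrite w2) ltac:(by rewrite w2 !mulr0 mul0r add0r).
    by move: s0p; rewrite s00 ltxx.
  have bn : beta < 0.
    rewrite ltNge; apply/negP => bp.
    have : 0 <= beta * s0 by rewrite mulr_ge0 // ltW.
    lra.
  apply: (common bn).
  have s1s0 : d1 / - beta < s0.
    rewrite ltr_pdivrMr ?oppr_gt0 //; lra.
  have : delta * s0 < delta * (d1 / - beta) by rewrite ltr_nM2l.
  lra.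
- case: (ltrgtP beta 0) => [bn|bp|be]; last by move: hb; rewrite be eqxx.
  + exfalso; apply: (common bn).
    have : 0 <= delta * (d1 / - beta) by rewrite mulr_ge0 ?ltW // divr_gt0 ?oppr_gt0.
    lra.
  + by [].
Qed.

Lemma mx2det (beta gamma delta : R) : beta != 0 -> gamma != 0 ->
  0 * delta - beta * gamma != 0.
Proof. by move=> hb hg; rewrite mul0r sub0r oppr_eq0 mulf_neq0. Qed.
Lemma mx2det' (beta gamma delta : R) : beta != 0 -> gamma != 0 ->
  delta * 0 - gamma * beta != 0.
Proof. by move=> hb hg; rewrite mulr0 sub0r oppr_eq0 mulf_neq0. Qed.
End S.

Theorem mainTheorem20 (R : realType) (beta gamma delta : R)
  (hb : beta != 0) (hg : gamma != 0) (hd : delta != 0) (A : 'M[R]_2)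
  (hA : A = mx2 0 beta gamma delta \/ A = mx2 delta gamma beta 0) :
  karamardian A <-> (gamma < 0 /\ 0 < beta /\ 0 < delta).
Proof.
have c := @core R beta gamma delta hb hg hd.
case: hA => ->.
  rewrite (@kar2 R 0 beta gamma delta (@mx2det R beta gamma delta hb hg)); exact: c.
rewrite (@kar2 R delta gamma beta 0 (@mx2det' R beta gamma delta hb hg)) -c.
split.
  case=> d1 [d2 [h1 h2 P0 Pd]]; exists d2, d1.
  split => //; exact/(@Pswap R beta gamma delta).
case=> d1 [d2 [h1 h2 P0 Pd]]; exists d2, d1.
split => //; exact/(@Pswap R beta gamma delta).
Qed.
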